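(* Let $\phi$ be a first order sentence in negation normal form. There exist a strategy $\sigma_0$ of Abelard in the model existence game $\mathrm{MEG}(\phi)$ (an ``enumeration strategy'') and a mapping $\Psi$ such that for every strategy $\tau$ of Eloise in $\mathrm{MEG}(\phi)$, the play of $\mathrm{MEG}(\phi)$ in which Abelard follows $\sigma_0$ and Eloise follows $\tau$ determines a unique structure $M(\tau)$ (whose domain consists of interpretations of the constants $c_n$), and $\Psi(\tau)$ is a strategy of Eloise in the evaluation game $G(M(\tau),\phi)$. If $\tau$ is a winning strategy of Eloise in $\mathrm{MEG}(\phi)$, then $\Psi(\tau)$ is a winning strategy of Eloise in $G(M(\tau),\phi)$.
   Context: An assignment into a set $X$ is a map from a finite set of variables into $X$; $s(a/x)$ denotes the assignment agreeing with $s$ except that it sends $x$ to $a$. A formula is in negation normal form if negation occurs only in front of atomic formulas; the connectives are $\neg,\wedge,\vee,\forall,\exists$. Evaluation game $G(M,\phi)$: players Abelard and Eloise. Positions are pairs $(\psi,s)$ with $\psi$ a subformula of $\phi$ and $s$ an assignment into $M$; initial position $(\phi,\emptyset)$. At $(\psi,s)$: if $\psi$ is a literal, the game ends and Eloise wins iff $s$ satisfies $\psi$ in $M$; if $\psi=\psi_0\wedge\psi_1$, Abelard chooses the next position $(\psi_0,s)$ or $(\psi_1,s)$; if $\psi=\psi_0\vee\psi_1$, Eloise chooses it; if $\psi=\forall x\theta$, Abelard chooses $a\in M$ and the next position is $(\theta,s(a/x))$; if $\psi=\exists x\theta$, Eloise chooses $a\in M$ and the next position is $(\theta,s(a/x))$.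 A strategy is winning if its player wins every play following it. Model existence game $\mathrm{MEG}(\phi)$: let $C=\{c_0,c_1,\ldots\}$ be a countable set of new distinct constant symbols; a $C$-assignment is an assignment into $C$. Positions are finite sets $S$ of pairs $(\psi,s)$ with $\psi$ a subformula of $\phi$ and $s$ a $C$-assignment; the initial position is $\{(\phi,\emptyset)\}$. At each move, given the position $S$, Abelard selects a pair in $S$ and one of the following applies: if $(\psi_0\wedge\psi_1,s)\in S$, Abelard may decide that the next position is $S\cup\{(\psi_0,s)\}$ or $S\cup\{(\psi_1,s)\}$; if $(\psi_0\vee\psi_1,s)\in S$, Abelard may demand that Eloise choose whether the next position is $S\cup\{(\psi_0,s)\}$ or $S\cup\{(\psi_1,s)\}$; if $(\forall x\theta,s)\in S$, Abelard may choose $n\in\mathbb N$ and the next position is $S\cup\{(\theta,s(c_n/x))\}$; if $(\exists x\theta,s)\in S$, Abelard may demand that Eloise choose some $c_n$, and the next position is $S\cup\{(\theta,s(c_n/x))\}$. Abelard wins if at some point the position contains both $(\psi,s)$ and $(\neg\psi,s')$ with $\psi$ atomic and $s(x)=s'(x)$ for all variables $x$ of $\psi$. Otherwise (the game continuing for infinitely many moves) Eloise wins.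
   Formalization: φ has a relational vocabulary without equality, and Abelard wins MEG(φ) once the position contains (ψ,s) and (¬ψ′,s′) with atomic ψ, ψ′ sharing a relation symbol and s, s′ sending their argument tuples to the same constants. The statement above fails without it. *)

(* Defs.v *)
From mathcomp Require Import all_boot.
From Stdlib Require List.

Set Implicit Arguments.
Unset Strict Implicit.
Unset Printing Implicit Defensive.

Section Syntax.
Variable Rel : Type.

(* Formulas in negation normal form: negation only in front of atoms. *)
Inductive form : Type :=
  | Atom  of Rel & seq nat
  | NAtom of Rel & seq nat
  | And   of form & form
  | Or    of form & form
  | All   of nat & form
  | Ex    of nat & form.

Fixpoint fv (f : form) : seq nat :=
  match f with
  | Atom _ xs | NAtom _ xs => xs
  | And g h | Or g h => fv g ++ fv h
  | All x g | Ex x g => [seq y <- fv g | y != x]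
  end.

Definition sentence (f : form) : Prop := fv f = [::].

Definition is_lit (f : form) : Prop :=
  match f with Atom _ _ | NAtom _ _ => True | _ => False end.

Definition asgn (D : Type) := nat -> option D.
Definition empty_asgn (D : Type) : asgn D := fun _ => None.
Definition upd (D : Type) (s : asgn D) (x : nat) (a : D) : asgn D :=
  fun y => if y == x then Some a else s y.

End Syntax.

(* Evaluation game G(M, phi); a structure with domain D interprets each
   relation symbol as a predicate on tuples (sequences) of elements.   *)
Section EvalGame.
Variables (Rel : Type) (D : Type) (I : Rel -> seq D -> Prop).

Definition epos := (form Rel * asgn D)%type.

Definition sat_lit (p : epos) : Prop :=
  match p.1 with
  | Atom R xs => exists v, map p.2 xs = map Some v /\ I R v
  | NAtom R xs => exists v, map p.2 xs = map Some v /\ ~ I R v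
  | _ => False
  end.

(* A strategy of Eloise: given the history of positions (ending with the
   current one), choose a disjunct (true = left) or an element of D. *)
Record estratG := EStratG {
  g_or : seq epos -> bool;
  g_ex : seq epos -> D }.

(* legal moves following Eloise's strategy; hist ends with cur *)
Definition emove (sg : estratG) (hist : seq epos) (cur nxt : epos) : Prop :=
  match cur.1 with
  | Atom _ _ | NAtom _ _ => False
  | And f g => nxt = (f, cur.2) \/ nxt = (g, cur.2)
  | Or f g => nxt = ((if g_or sg hist then f else g), cur.2)
  | All x f => exists a, nxt = (f, upd cur.2 x a)
  | Ex x f => nxt = (f, upd cur.2 x (g_ex sg hist))
  end.

Fixpoint follows (sg : estratG) (h : seq epos) (cur : epos) (rest : seq epos)
  : Prop :=
  match rest with
  | [::] => is_lit cur.1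
  | nxt :: r => emove sg (rcons h cur) cur nxt /\ follows sg (rcons h cur) nxt r
  end.

Definition winningG (phi : form Rel) (sg : estratG) : Prop :=
  forall rest, follows sg [::] (phi, empty_asgn D) rest ->
    sat_lit (last (phi, empty_asgn D) rest).

End EvalGame.

(* Model existence game MEG(phi).  The new constant c_n is identified with
   the natural number n, so C-assignments are asgn nat. *)
Section MEG.
Variable Rel : Type.

Definition mpair := (form Rel * asgn nat)%type.

(* Abelard's move: the selected pair, a side for a conjunction
   (true = left), and an index n for a universal quantifier. *)
Definition amove := (mpair * bool * nat)%type.

(* a round: Abelard's move and the pair that is added to the position *)
Definition round := (amove * mpair)%type.

Definition astrat := seq round -> amove.

Record estratM := EStratM {
  m_or : seq round -> amove -> bool;   (* true = left disjunct *)
  m_ex : seq round -> amove -> nat }.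

(* the pair added in response to Abelard's move (a literal selection,
   which is illegal, just re-adds the selected pair) *)
Definition result (tau : estratM) (h : seq round) (am : amove) : mpair :=
  let: (p, b, k) := am in
  match p.1 with
  | Atom _ _ | NAtom _ _ => p
  | And f g => (if b then f else g, p.2)
  | Or f g => (if m_or tau h am then f else g, p.2)
  | All x f => (f, upd p.2 x k)
  | Ex x f => (f, upd p.2 x (m_ex tau h am))
  end.

Fixpoint rounds (sigma : astrat) (tau : estratM) (n : nat) : seq round :=
  match n with
  | 0 => [::]
  | n'.+1 => let h := rounds sigma tau n' in
             let am := sigma h in rcons h (am, result tau h am)
  end.

(* the position (finite set of pairs, as a list) after n moves *)
Definition pos_at (phi : form Rel) sigma tau n : seq mpair :=
  (phi, empty_asgn nat) :: map snd (rounds sigma tau n).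

Definition legal_sel (S : seq mpair) (p : mpair) : Prop :=
  List.In p S /\ ~ is_lit p.1.

Definition legalA (phi : form Rel) (sigma : astrat) (tau : estratM) : Prop :=
  forall n, let S := pos_at phi sigma tau n in
    (exists q, legal_sel S q) -> legal_sel S (sigma (rounds sigma tau n)).1.1.

(* Abelard's winning condition: complementary literals with the same
   relation symbol and the same tuple of constants. *)
Definition clash (S : seq mpair) : Prop :=
  exists R xs ys s s', List.In (Atom R xs, s) S /\ List.In (NAtom R ys, s') S
    /\ map s xs = map s' ys.

Definition winningM (phi : form Rel) (tau : estratM) : Prop :=
  forall sigma : astrat, legalA phi sigma tau ->
    forall n, ~ clash (pos_at phi sigma tau n).

Definition Mtau (phi : form Rel) (sigma0 : astrat) (tau : estratM)
  : Rel -> seq nat -> Prop :=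
  fun R v => exists n xs s, List.In (Atom R xs, s) (pos_at phi sigma0 tau n)
                            /\ map s xs = map Some v.

End MEG.

(* Main.v *)
Require Import Defs.
From mathcomp Require Import all_boot.
From Stdlib Require Import ClassicalEpsilon.
From Stdlib Require List.

Set Implicit Arguments.
Unset Strict Implicit.

Lemma In_rcons (T : Type) (s : seq T) x : List.In x (rcons s x).
Proof. elim: s => [|a s IH] /=; auto. Qed.

Lemma In_nth (T : Type) (d : T) (s : seq T) p :
  List.In p s -> exists i, i < size s /\ nth d s i = p.
Proof.
elim: s => [|a s IH] //= [->|H]; first by exists 0.
by have [i [Hi Hn]] := IH H; exists i.+1.
Qed.

Lemma nth_In (T : Type) (d : T) (s : seq T) i : i < size s -> List.In (nth d s i) s.
Proof. elim: s i => [|a s IH] [|i] //= H; auto. Qed.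

Lemma head_filter_In (T : Type) (d : T) (P : pred T) (s : seq T) q :
  List.In q s -> P q -> List.In (head d (filter P s)) s /\ P (head d (filter P s)).
Proof.
elim: s => [|a s IH] //= [->|H] Hq; first by rewrite Hq /=; auto.
case: ifP => Ha /=; first by auto.
by have [] := IH H Hq; auto.
Qed.

Lemma inj_unbounded (f : nat -> nat) : injective f -> forall N, exists t, N <= f t.
Proof.
move=> finj N; case: (Classical_Prop.classic (exists t, N <= f t)) => // H.
exfalso.
have Hlt : forall t, f t < N.
  by move=> t; case: (leqP N (f t)) => // Hle; exfalso; apply: H; exists t.
have U : uniq (map f (iota 0 N.+1)) by rewrite map_inj_uniq // iota_uniq.
have S : {subset map f (iota 0 N.+1) <= iota 0 N}.
  by move=> y /mapP [t _ ->]; rewrite mem_iota /= add0n Hlt.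
by have := uniq_leq_size U S; rewrite size_map !size_iota ltnn.
Qed.

Lemma size_rounds Rel (sig : astrat Rel) tau n : size (rounds sig tau n) = n.
Proof. by elim: n => //= n IH; rewrite size_rcons IH. Qed.

Lemma rounds_prefix Rel (sig : astrat Rel) tau n m :
  exists r, rounds sig tau (m + n) = rounds sig tau n ++ r.
Proof.
elim: m => [|m [r IH]]; first by exists [::]; rewrite cats0.
by exists (rcons r (sig (rounds sig tau (m + n)),
    result tau (rounds sig tau (m + n)) (sig (rounds sig tau (m + n)))));
   rewrite addSn /= IH rcons_cat.
Qed.

Lemma In_pos_mono Rel (phi : form Rel) sig tau n m p :
  List.In p (pos_at phi sig tau n) -> n <= m -> List.In p (pos_at phi sig tau m).
Proof.
move=> H Hnm; rewrite -(subnK Hnm) /pos_at; have [r ->] := rounds_prefix sig tau n (m - n).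
move: H; rewrite /pos_at /= map_cat => -[->|H]; [by left|right].
by apply: List.in_or_app; left.
Qed.

Lemma In_result Rel (phi : form Rel) sig tau n :
  List.In (result tau (rounds sig tau n) (sig (rounds sig tau n))) (pos_at phi sig tau n.+1).
Proof. by rewrite /pos_at /= map_rcons; right; apply: In_rcons. Qed.

Section Main.
Variable Rel : Type.
Variable phi : form Rel.
Local Notation mp := (mpair Rel).

Definition islitb (f : form Rel) : bool :=
  match f with Atom _ _ | NAtom _ _ => true | _ => false end.

Lemma islitbP f : ~ is_lit f -> ~~ islitb f.
Proof. by case: f => //= r l H; exfalso; exact: H I. Qed.
Lemma islitbP' f : ~~ islitb f -> ~ is_lit f.
Proof. by case: f => //= ? ? _ []. Qed.

Definition d0 : mp := (phi, empty_asgn nat).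
Definition posof (h : seq (round Rel)) : seq mp := d0 :: map snd h.
Definition fb (S : seq mp) : amove Rel :=
  (head d0 [seq p <- S | ~~ islitb p.1], true, 0).
Definition sig0 : astrat Rel := fun h =>
  let S := posof h in
  match @unpickle (nat * bool * nat * nat)%type (size h) with
  | Some (i, b, k, t) =>
      if (i < size S) && ~~ islitb (nth d0 S i).1 then (nth d0 S i, b, k) else fb S
  | None => fb S
  end.

Lemma sig0_legal tau : legalA phi sig0 tau.
Proof.
move=> n /= [q [Hq Hnl]].
have Hfb : legal_sel (pos_at phi sig0 tau n) (fb (pos_at phi sig0 tau n)).1.1.
  have [H1 H2] := head_filter_In d0 (P := fun p : mp => ~~ islitb p.1) Hq (islitbP Hnl).
  by split => //; apply: islitbP'.
rewrite /sig0; case: unpickle => [[[[i b] k] t]|] //.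
case: ifP => // /andP [Hi Hn]; split; first exact: nth_In.
exact: islitbP'.
Qed.

Lemma fair tau n0 (p : mp) b k :
  List.In p (pos_at phi sig0 tau n0) -> ~~ islitb p.1 ->
  exists n, sig0 (rounds sig0 tau n) = (p, b, k).
Proof.
move=> Hin Hnl; have [i [Hi Hnth]] := In_nth d0 Hin.
have finj : injective (fun t : nat => pickle (i, b, k, t)).
  move=> t1 t2 H; have := pcan_inj (@pickleK (nat * bool * nat * nat)%type) H; by case.
have [t Ht] := inj_unbounded finj n0.
exists (pickle (i, b, k, t)).
set n := pickle _ in Ht *.
have [r Hr] := rounds_prefix sig0 tau n0 (n - n0).
rewrite subnK // in Hr.
have E : posof (rounds sig0 tau n) = pos_at phi sig0 tau n0 ++ map snd r.
  by rewrite /posof Hr map_cat.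
have Hsz : i < size (posof (rounds sig0 tau n)).
  by rewrite E size_cat (leq_trans Hi (leq_addr _ _)).
have Hn' : nth d0 (posof (rounds sig0 tau n)) i = p.
  by rewrite E nth_cat Hi Hnth.
rewrite /sig0 size_rounds /n pickleK.
cbv zeta iota beta.
by rewrite Hsz Hn' Hnl.
Qed.


Definition Nsel tau (p : mp) : nat :=
  epsilon (inhabits 0) (fun n => sig0 (rounds sig0 tau n) = (p, true, 0)).

Definition Psi tau : estratG Rel nat :=
  @EStratG Rel nat
    (fun hist => m_or tau (rounds sig0 tau (Nsel tau (last d0 hist))) (last d0 hist, true, 0))
    (fun hist => m_ex tau (rounds sig0 tau (Nsel tau (last d0 hist))) (last d0 hist, true, 0)).

Definition Inv tau (p : mp) : Prop :=
  (exists n, List.In p (pos_at phi sig0 tau n)) /\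
  (forall y, y \in fv p.1 -> p.2 y <> None).

Lemma Nsel_spec tau n0 (p : mp) : List.In p (pos_at phi sig0 tau n0) -> ~~ islitb p.1 ->
  sig0 (rounds sig0 tau (Nsel tau p)) = (p, true, 0).
Proof. move=> H1 H2; exact: (epsilon_spec (inhabits 0) (fun n => sig0 (rounds sig0 tau n) = (p, true, 0)) (fair true 0 H1 H2)). Qed.

Lemma step tau h (cur nxt : mp) :
  Inv tau cur -> emove (Psi tau) (rcons h cur) cur nxt -> Inv tau nxt.
Proof.
case: cur => f s [[n0 Hin] Hfv].
case: f Hin Hfv => //= [f g|f g|x f|x f] Hin Hfv.
- case=> ->.
  + have [n Hn] := fair true 0 Hin isT.
    split; first by exists n.+1; have := In_result phi sig0 tau n; rewrite Hn.
    by move=> y Hy; apply: Hfv; rewrite mem_cat Hy.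
  + have [n Hn] := fair false 0 Hin isT.
    split; first by exists n.+1; have := In_result phi sig0 tau n; rewrite Hn.
    by move=> y Hy; apply: Hfv; rewrite mem_cat Hy orbT.
- move=> ->; rewrite /Psi /= last_rcons.
  have Hn := Nsel_spec Hin isT.
  split; first by exists (Nsel tau (Or f g, s)).+1;
    have := In_result phi sig0 tau (Nsel tau (Or f g, s)); rewrite Hn.
  by case: ifP => _ y Hy; apply: Hfv; rewrite mem_cat Hy ?orbT.
- case=> a ->.
  have [n Hn] := fair true a Hin isT.
  split; first by exists n.+1; have := In_result phi sig0 tau n; rewrite Hn.
  move=> y Hy /=; rewrite /upd; case: eqP => // /eqP Hyx.
  by apply: Hfv; rewrite mem_filter Hyx.
- move=> ->; rewrite /Psi /= last_rcons.
  have Hn := Nsel_spec Hin isT.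
  split; first by exists (Nsel tau (Ex x f, s)).+1;
    have := In_result phi sig0 tau (Nsel tau (Ex x f, s)); rewrite Hn.
  move=> y Hy /=; rewrite /upd; case: eqP => // /eqP Hyx.
  by apply: Hfv; rewrite mem_filter Hyx.
Qed.

Lemma follows_inv tau rest : forall h cur, Inv tau cur -> follows (Psi tau) h cur rest ->
  Inv tau (last cur rest) /\ is_lit (last cur rest).1.
Proof.
elim: rest => [|nxt r IH] h cur Hi /=; first by [].
by case=> Hm Hf; apply: (IH (rcons h cur)) => //; apply: step Hm.
Qed.

Lemma defined_map (s : asgn nat) xs : (forall y, y \in xs -> s y <> None) ->
  exists v, map s xs = map Some v.
Proof.
elim: xs => [|x xs IH] H; first by exists [::].
have [v Hv] : exists v, map s xs = map Some v.
  by apply: IH => y Hy; apply: H; rewrite inE Hy orbT.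
case E: (s x) => [a|]; last by exfalso; apply: (H x); rewrite ?inE ?eqxx.
by exists (a :: v); rewrite /= E Hv.
Qed.

End Main.

Theorem theorem3 (Rel : Type) (phi : form Rel) (Hphi : sentence phi) :
  exists (sigma0 : astrat Rel) (Psi : estratM Rel -> estratG Rel nat),
    (forall tau : estratM Rel, legalA phi sigma0 tau) /\
    (forall tau : estratM Rel, winningM phi tau ->
       winningG (Mtau phi sigma0 tau) phi (Psi tau)).
Proof.
exists (sig0 phi), (Psi phi); split; first exact: sig0_legal.
move=> tau Hw rest Hf.
have Hi0 : Inv phi tau (phi, empty_asgn nat).
  split; first by exists 0; left.
  by move=> y; rewrite /= Hphi.
have [[[n Hin] Hfv] Hlit] := follows_inv Hi0 Hf.
move: Hin Hfv Hlit; case: (last _ rest) => f s.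
case: f => //= R xs Hin Hfv _; have [v Hv] := defined_map Hfv;
  rewrite /sat_lit /=; exists v; split => //.
- by exists n, xs, s.
- move=> [n' [xs' [s' [Hin' Hm']]]].
  have Hc := Hw (sig0 phi) (@sig0_legal _ phi tau) (maxn n n'); apply: Hc.
  exists R, xs', xs, s', s; split; [|split].
  + by apply: In_pos_mono Hin' _; rewrite leq_maxr.
  + by apply: In_pos_mono Hin _; rewrite leq_maxl.
  + by rewrite Hm' Hv.
Qed.
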